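(* Let $p$ be a prime and let $G$ be a finite $p$-group. Let $x\in G$ with $o(x)=p$, and let $\Upsilon$ be the connected component of the cyclic graph $\Delta(G)$ containing $x$. Then $x\sim y$ (i.e. $\langle x,y\rangle$ is cyclic) for every $y\in\Upsilon$ with $y\neq x$.
   Context: For a finite group $G$, the cyclic graph $\Delta(G)$ has vertex set $G^{\#}=G\setminus\{1\}$, and distinct vertices $x,y$ are adjacent (written $x\sim y$) if and only if the subgroup $\langle x,y\rangle$ is cyclic. $o(x)$ denotes the order of $x$. *)

(* Defs.v *)
From mathcomp Require Import all_boot all_fingroup all_solvable.
Set Implicit Arguments. Unset Strict Implicit. Unset Printing Implicit Defensive.
Local Open Scope group_scope.

Definition cyc_adj (gT : finGroupType) (G : {set gT}) : rel gT :=
  fun x y => [&& x \in G^#, y \in G^#, x != y & cyclic <<[set x; y]>>].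

Definition same_component (gT : finGroupType) (G : {set gT}) (x y : gT) : bool :=
  connect (cyc_adj G) x y.

(* Main.v *)
Require Import Defs.
From mathcomp Require Import all_boot all_fingroup all_solvable.
Local Open Scope group_scope.

Lemma key_step (gT : finGroupType) (G : {group gT}) (p : nat) (x w z : gT) :
  prime p -> p.-group G -> #[x] = p -> x \in <[w]> -> cyc_adj G w z ->
  x \in <[z]>.
Proof.
move=> pr pG ox xw /and4P[/setD1P[ntw Gw] /setD1P[ntz Gz] _ cyc].
set C := <<[set w; z]>>.
have sZG : <[z]> \subset G by rewrite cycle_subG.
have pZ : p.-group <[z]> := pgroupS sZG pG.
have ntZ : <[z]> != 1 by rewrite cycle_eq1.
case/(pgroup_pdiv pZ): ntZ => _ pdvd _.
have [u Zu ou] := Cauchy pr pdvd.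
have sZC : <[z]> \subset C by rewrite cycle_subG mem_gen // !inE eqxx orbT.
have sWC : <[w]> \subset C by rewrite cycle_subG mem_gen // !inE eqxx.
have sXC : <[x]> \subset C by rewrite cycle_subG (subsetP sWC).
have sUC : <[u]> \subset C by rewrite cycle_subG (subsetP sZC).
have e : <[u]> :==: <[x]>.
  by rewrite (eq_subG_cyclic cyc sUC sXC) -/#[u] -/#[x] ou ox.
move/eqP: e => e.
have : x \in <[u]> by rewrite e cycle_id.
by apply/subsetP; rewrite cycle_subG.
Qed.

Theorem lemma2p2 (gT : finGroupType) (G : {group gT}) (p : nat) (x : gT) :
  prime p -> p.-group G -> x \in G -> #[x] = p ->
  forall y : gT, same_component G x y -> y != x -> cyc_adj G x y.
Proof.
move=> pr pG Gx ox y /connectP[s pth ->] neq.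
have ntx : x != 1.
  apply/eqP => x1; move: ox; rewrite x1 order1 => p1.
  by move: pr; rewrite -p1.
have inv : forall s w, w \in G^# -> x \in <[w]> -> path (cyc_adj G) w s ->
    last w s \in G^# /\ x \in <[last w s]>.
  elim=> [|v s' IH] w wG xw //= /andP[adj pth'].
  apply: IH => //; first by case/and4P: adj.
  exact: (@key_step _ _ _ _ _ _ pr pG ox xw adj).
have xG : x \in G^# by rewrite !inE ntx Gx.
have [yG xy] := inv s x xG (cycle_id x) pth.
apply/and4P; split => //; first by rewrite eq_sym.
apply: cyclicS (cycle_cyclic (last x s)).
rewrite gen_subG; apply/subsetP => u /set2P[]->//; exact: cycle_id.
Qed.
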